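(* Let $\mathscr{H}$ be a complex Hilbert space, $N(\cdot)$ a norm on $\mathbb{B}(\mathscr{H})$, and $B,C\in\mathbb{B}(\mathscr{H})$ self-adjoint. Then $$\max\{N(B),N(C)\}\leq w_{(N,e)}(B,C)\leq\sqrt{N^2(B)+N^2(C)}.$$
   Context: For $T\in\mathbb{B}(\mathscr{H})$, $\Re(T)=\frac12(T+T^* )$. For $B,C\in\mathbb{B}(\mathscr{H})$, $w_{(N,e)}(B,C)=\sup_{\lambda_1,\lambda_2\in\mathbb{C},\ |\lambda_1|^2+|\lambda_2|^2\leq 1}\sup_{\theta\in\mathbb{R}} N(\Re(e^{i\theta}(\lambda_1B+\lambda_2C)))$. *)

(* Defs.v *)
From mathcomp Require Import all_boot all_order all_algebra.
From mathcomp Require Import all_classical all_reals all_analysis.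
From mathcomp Require Import complex.
Set Implicit Arguments. Unset Strict Implicit. Unset Printing Implicit Defensive.
Import Order.TTheory GRing.Theory Num.Theory.
Local Open Scope ring_scope.
Local Open Scope complex_scope.

Section Hilbert.
Variables (R : realType) (H : lmodType R[i]) (ip : H -> H -> R[i]).

Definition hnorm (x : H) : R := Num.sqrt (complex.Re (ip x x)).

Definition is_hilbert_space : Prop :=
  [/\ (forall (a : R[i]) (x y z : H), ip (a *: x + y) z = a * ip x z + ip y z),
      (forall x y : H, ip y x = (ip x y)^*),
      (forall x : H, 0 <= ip x x),
      (forall x : H, ip x x = 0 -> x = 0) &
      (forall u : nat -> H,
         (forall e : R, 0 < e -> exists N : nat, forall m n : nat,
            (N <= m)%N -> (N <= n)%N -> hnorm (u m - u n) < e) ->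
         exists l : H, forall e : R, 0 < e -> exists N : nat, forall n : nat,
            (N <= n)%N -> hnorm (u n - l) < e)].

Definition bounded_op (T : H -> H) : Prop :=
  (forall (a : R[i]) (x y : H), T (a *: x + y) = a *: T x + T y) /\
  exists M : R, forall x : H, hnorm (T x) <= M * hnorm x.

Definition is_adjoint (T S : H -> H) : Prop :=
  forall x y : H, ip (T x) y = ip x (S y).

(* the adjoint T^* (exists and is unique for T in B(H) on a Hilbert space) *)
Definition adjoint (T : H -> H) : H -> H :=
  match pselect (exists S, is_adjoint T S) with
  | left h => projT1 (cid h)
  | right _ => T
  end.

Definition selfadjoint (T : H -> H) : Prop :=
  bounded_op T /\ forall x y : H, ip (T x) y = ip x (T y).

Definition ReOp (T : H -> H) : H -> H :=
  fun x => (2%:R)^-1 *: (T x + adjoint T x).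

Definition is_norm_BH (N : (H -> H) -> R) : Prop :=
  [/\ (forall T, bounded_op T -> 0 <= N T),
      (forall T, bounded_op T -> N T = 0 -> forall x, T x = 0),
      (forall (a : R[i]) T, bounded_op T -> N (fun x => a *: T x) = Normc.normc a * N T) &
      (forall T S, bounded_op T -> bounded_op S ->
         N (fun x => T x + S x) <= N T + N S)].

Definition expi (t : R) : R[i] := (cos t +i* sin t)%C.

Definition wNe (N : (H -> H) -> R) (B C : H -> H) : R :=
  sup [set r : R | exists (l1 l2 : R[i]) (t : R),
        Normc.normc l1 ^+ 2 + Normc.normc l2 ^+ 2 <= 1 /\
        r = N (ReOp (fun x => expi t *: (l1 *: B x + l2 *: C x)))].

End Hilbert.

(* Main.v *)
Require Import Defs.
From mathcomp Require Import all_boot all_order all_algebra.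
From mathcomp Require Import all_classical all_reals all_analysis.
From mathcomp Require Import complex.
From mathcomp Require Import ring.
Import Order.TTheory GRing.Theory Num.Theory.
Local Open Scope ring_scope.
Set Implicit Arguments. Unset Strict Implicit.

Section Aux.
Local Open Scope complex_scope.
Variables (R : realType) (H : lmodType R[i]) (ip : H -> H -> R[i]).
Hypothesis lin : forall (a : R[i]) (x y z : H), ip (a *: x + y) z = a * ip x z + ip y z.
Hypothesis sym : forall x y : H, ip y x = (ip x y)^*.
Hypothesis pd : forall x : H, ip x x = 0 -> x = 0.

Lemma ip0l z : ip 0 z = 0.
Proof.
have h := lin 1 0 0 z; rewrite scale1r addr0 mul1r in h.
by rewrite -[LHS]addr0 in h; symmetry; exact: addrI h.
Qed.

Lemma ipD_l x y z : ip (x + y) z = ip x z + ip y z.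
Proof. by have h := lin 1 x y z; rewrite scale1r mul1r in h. Qed.

Lemma ipZ_l a x z : ip (a *: x) z = a * ip x z.
Proof. by have h := lin a x 0 z; rewrite addr0 ip0l addr0 in h. Qed.

Lemma ipD_r x y z : ip z (x + y) = ip z x + ip z y.
Proof. by rewrite sym ipD_l [ip z x]sym [ip z y]sym; exact: rmorphD. Qed.

Lemma ipZ_r a x z : ip z (a *: x) = a^* * ip z x.
Proof. by rewrite sym ipZ_l [ip z x]sym; exact: rmorphM. Qed.

Lemma ipN_r x z : ip z (- x) = - ip z x.
Proof. by rewrite -scaleN1r ipZ_r rmorphN1 mulN1r. Qed.

Lemma adjointE T S : is_adjoint ip T S -> forall y, adjoint ip T y = S y.
Proof.
move=> hS y; rewrite /adjoint; case: pselect => [h|[]]; last by exists S.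
case: (cid h) => S' hS' /=.
set d := S' y - S y.
have : ip d d = 0 by rewrite {2}/d ipD_r ipN_r -hS' -hS subrr.
by move/pd => /eqP; rewrite subr_eq0 => /eqP.
Qed.

Lemma Re_realM (r : R) (z : R[i]) : complex.Re (r%:C * z) = r * complex.Re z.
Proof. by case: z => p q /=; rewrite mul0r subr0. Qed.

Lemma normc_real (r : R) : Normc.normc (r%:C) = `|r|.
Proof. by rewrite /= expr0n /= addr0 sqrtr_sqr. Qed.

Lemma normc_ge0 (c : R[i]) : 0 <= Normc.normc c.
Proof. by case: c => ? ?; exact: sqrtr_ge0. Qed.

Lemma mulcJ (c : R[i]) : c * c^* = (Normc.normc c ^+ 2)%:C.
Proof.
case: c => x y /=; rewrite sqr_sqrtr ?addr_ge0 ?sqr_ge0 //.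
by apply/eqP; rewrite eq_complex /= !expr2 mulrN opprK eqxx /= mulrN mulrC addNr.
Qed.

Lemma hnormZ c v : hnorm ip (c *: v) = Normc.normc c * hnorm ip v.
Proof.
rewrite /hnorm ipZ_l ipZ_r mulrA mulcJ Re_realM sqrtrM ?sqr_ge0 //.
by rewrite sqrtr_sqr ger0_norm ?normc_ge0.
Qed.

Lemma boundedZ c T : bounded_op ip T -> bounded_op ip (fun x => c *: T x).
Proof.
move=> [hl [M hM]]; split.
  by move=> a x y; rewrite hl scalerDr !scalerA mulrC.
exists (Normc.normc c * M) => x; rewrite hnormZ -mulrA.
by apply: ler_wpM2l; [exact: normc_ge0 | exact: hM].
Qed.

Lemma Re_sqr_le (z : R[i]) : complex.Re z ^+ 2 <= Normc.normc z ^+ 2.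
Proof.
case: z => x y /=; rewrite sqr_sqrtr ?addr_ge0 ?sqr_ge0 //.
by rewrite lerDl sqr_ge0.
Qed.

Lemma normc_expi (t : R) : Normc.normc (expi t) = 1.
Proof. by rewrite /expi /= cos2Dsin2 sqrtr1. Qed.

End Aux.


Lemma cs_bound (R : realType) (p q u v : R) :
  0 <= p -> 0 <= q -> 0 <= u -> 0 <= v -> p ^+ 2 + q ^+ 2 <= 1 ->
  p * u + q * v <= Num.sqrt (u ^+ 2 + v ^+ 2).
Proof.
move=> p0 q0 u0 v0 hpq.
have h0 : 0 <= p * u + q * v by rewrite addr_ge0 ?mulr_ge0.
rewrite -[p * u + q * v]ger0_norm // -sqrtr_sqr ler_sqrt ?addr_ge0 ?sqr_ge0 //.
have h1 : (p * u + q * v) ^+ 2 <= (p ^+ 2 + q ^+ 2) * (u ^+ 2 + v ^+ 2).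
  rewrite -subr_ge0.
  have -> : (p ^+ 2 + q ^+ 2) * (u ^+ 2 + v ^+ 2) - (p * u + q * v) ^+ 2
    = (p * v - q * u) ^+ 2 by rewrite !expr2; ring.
  exact: sqr_ge0.
apply: (le_trans h1); rewrite -[X in _ <= X]mul1r.
by apply: ler_wpM2r => //; rewrite addr_ge0 ?sqr_ge0.
Qed.

Section Main.
Local Open Scope complex_scope.
Variables (R : realType) (H : lmodType R[i]) (ip : H -> H -> R[i]) (B C : H -> H).
Hypothesis lin : forall (a : R[i]) (x y z : H), ip (a *: x + y) z = a * ip x z + ip y z.
Hypothesis sym : forall x y : H, ip y x = (ip x y)^*.
Hypothesis pd : forall x : H, ip x x = 0 -> x = 0.
Hypothesis Bs : forall x y : H, ip (B x) y = ip x (B y).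
Hypothesis Cs : forall x y : H, ip (C x) y = ip x (C y).

Lemma ReOpE (l1 l2 : R[i]) (t : R) :
  ReOp ip (fun x => expi t *: (l1 *: B x + l2 *: C x)) =
  (fun x => (complex.Re (expi t * l1))%:C *: B x + (complex.Re (expi t * l2))%:C *: C x).
Proof.
set a := expi t * l1; set b := expi t * l2.
have hadj : is_adjoint ip (fun x => expi t *: (l1 *: B x + l2 *: C x))
    (fun y => a^* *: B y + b^* *: C y).
  move=> x y /=; rewrite (ipZ_l lin) (ipD_l lin) !(ipZ_l lin) Bs Cs.
  have cK : forall z : R[i], z^*^* = z by move=> [? ?]; rewrite /= opprK.
  rewrite (ipD_r lin sym) !(ipZ_r lin sym) /a /b.
  by rewrite mulrDr !mulrA; congr (_ * _ + _ * _); symmetry; exact: cK.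
apply: funext => x; rewrite /ReOp (adjointE lin sym pd hadj) !ReJ_add.
rewrite !(scalerDr, scalerDl, scalerA) /a /b.
rewrite ![2%:R^-1 * _]mulrC.
rewrite !mulrDl !scalerDl addrACA; congr (_ + _ + (_ + _)); by rewrite ?[_ / 2 * _]mulrAC.
Qed.

End Main.

Theorem corollary2p5 (R : realType) (H : lmodType R[i]) (ip : H -> H -> R[i])
  (N : (H -> H) -> R) (B C : H -> H) :
  is_hilbert_space ip -> is_norm_BH ip N ->
  selfadjoint ip B -> selfadjoint ip C ->
  Num.max (N B) (N C) <= wNe ip N B C /\
  wNe ip N B C <= Num.sqrt (N B ^+ 2 + N C ^+ 2).
Proof.
move=> [lin sym pos pd _] [N0 N00 NZ ND] [Bb Bs] [Cb Cs].
have key : forall (l1 l2 : R[i]) (t : R),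
    Normc.normc l1 ^+ 2 + Normc.normc l2 ^+ 2 <= 1 ->
    N (ReOp ip (fun x => expi t *: (l1 *: B x + l2 *: C x))) <=
    Num.sqrt (N B ^+ 2 + N C ^+ 2).
  move=> l1 l2 t hl; rewrite (ReOpE lin sym pd Bs Cs).
  apply: le_trans (ND _ _ (boundedZ lin sym _ Bb) (boundedZ lin sym _ Cb)) _.
  rewrite !NZ // !normc_real; apply: cs_bound; rewrite ?normr_ge0 ?N0 //.
  rewrite !real_normK ?num_real //; apply: le_trans hl.
  apply: lerD; apply: (le_trans (Re_sqr_le _)); by rewrite Normc.normcM normc_expi mul1r.
have memB : N B = N (ReOp ip (fun x => expi 0 *: (1 *: B x + 0 *: C x))).
  rewrite (ReOpE lin sym pd Bs Cs); congr N; apply: funext => x.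
  rewrite /expi cos0 sin0 /= !mulr1 !mulr0 !subr0 -[(1:R)%:C%C]/(1:R[i]) -[(0:R)%:C%C]/(0:R[i]).
  by rewrite scale0r addr0 scale1r.
have memC : N C = N (ReOp ip (fun x => expi 0 *: (0 *: B x + 1 *: C x))).
  rewrite (ReOpE lin sym pd Bs Cs); congr N; apply: funext => x.
  rewrite /expi cos0 sin0 /= !mulr1 !mulr0 !subr0 -[(1:R)%:C%C]/(1:R[i]) -[(0:R)%:C%C]/(0:R[i]).
  by rewrite scale0r add0r scale1r.
have hub : ubound [set r : R | exists (l1 l2 : R[i]) (t : R),
        Normc.normc l1 ^+ 2 + Normc.normc l2 ^+ 2 <= 1 /\
        r = N (ReOp ip (fun x => expi t *: (l1 *: B x + l2 *: C x)))]
    (Num.sqrt (N B ^+ 2 + N C ^+ 2)).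
  by move=> r [l1 [l2 [t [hl ->]]]]; exact: key.
have n1 : Normc.normc (1 : R[i]) ^+ 2 + Normc.normc (0 : R[i]) ^+ 2 <= 1.
  by rewrite Normc.normc1 Normc.normc0 expr1n expr0n addr0.
have n2 : Normc.normc (0 : R[i]) ^+ 2 + Normc.normc (1 : R[i]) ^+ 2 <= 1.
  by rewrite Normc.normc1 Normc.normc0 expr1n expr0n add0r.
split.
  rewrite ge_max; apply/andP; split; apply: ub_le_sup; try by exists (Num.sqrt (N B ^+ 2 + N C ^+ 2)).
    by exists 1, 0, 0.
  by exists 0, 1, 0.
apply: ge_sup => //; exists (N B); by exists 1, 0, 0.
Qed.
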